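(* Let $V\subset\mathbb{R}^d$ be a finite set of points, let $\varepsilon>0$, $c>1$ and let $k\ge 1$ be an integer. Let $S$ be a set of edges (unordered pairs of distinct points of $V$), partitioned as $S=S_0\cup S_1\cup\dots\cup S_{k-1}$, where $S_i$ is the set of edges of $S$ of index $i$. Suppose that Invariant 1 holds for every $S_i$, $0\le i\le k-1$. Then $S$, viewed as a graph on $V$ in which each edge $\{x,y\}$ has weight $\lVert xy\rVert$, is a $(1+\varepsilon)$-spanner of $V$: for all $u,v\in V$, the shortest-path distance $d_S(u,v)$ in $S$ satisfies $d_S(u,v)\le(1+\varepsilon)\lVert uv\rVert$.
   Context: $\lVert xy\rVert$ denotes the Euclidean distance between $x,y\in\mathbb{R}^d$. For distinct $u,v$, the index of the pair is $\operatorname{index}(u,v)=\lfloor \log_c\lVert uv\rVert\rfloor \bmod k$; the index of an edge is the index of its endpoint pair. Invariant 1 for $S_i$: for every pair $\{u,v\}$ of distinct points of $V$ with $\operatorname{index}(u,v)=i$ and $\{u,v\}\notin S_i$, there exist $l\ge 1$ and edges $\{x_1,y_1\},\dots,\{x_l,y_l\}\in S_i$ (each written with some ordering of its endpoints) such that $$\sum_{m=1}^l \lVert x_my_m\rVert+(1+\varepsilon)\Big(\lVert ux_1\rVert+\sum_{m=1}^{l-1}\lVert y_mx_{m+1}\rVert+\lVert y_lv\rVert\Big)<(1+\varepsilon)\lVert uv\rVert .$$ *)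

(* Defs.v *)
From HB Require Import structures.
From mathcomp Require Import all_boot all_order all_algebra.
From mathcomp Require Import finmap.
From mathcomp Require Import all_classical all_reals all_analysis.
Set Implicit Arguments. Unset Strict Implicit. Unset Printing Implicit Defensive.
Import Order.TTheory GRing.Theory Num.Theory.
Local Open Scope classical_set_scope.
Local Open Scope fset_scope.
Local Open Scope ring_scope.

Section Spanner.
Variables (R : realType) (d : nat).
Notation pt := 'rV[R]_d.

Definition eucl_dist (x y : pt) : R := Num.sqrt (\sum_(i < d) (x ord0 i - y ord0 i) ^+ 2).

Definition pindex (c : R) (k : nat) (u v : pt) : int :=
  (Num.floor (ln (eucl_dist u v) / ln c) %% (k%:Z))%Z.

(* an edge is an unordered pair, encoded as a 2-element finite set *)
Definition edge (x y : pt) : {fset pt} := [fset x; y].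

Definition Sidx (c : R) (k : nat) (S : set {fset pt}) (i : nat) : set {fset pt} :=
  [set e | S e /\ exists x y, e = edge x y /\ x != y /\ pindex c k x y = i%:Z].

(* ||u x_1|| + sum_{m<l} ||y_m x_{m+1}|| + ||y_l v|| for ps = [(x_1,y_1);...;(x_l,y_l)] *)
Fixpoint gaps (u : pt) (ps : seq (pt * pt)) (v : pt) : R :=
  match ps with
  | [::] => eucl_dist u v
  | p :: ps' => eucl_dist u p.1 + gaps p.2 ps' v
  end.

Definition invariant1 (V : set pt) (eps c : R) (k : nat) (S : set {fset pt}) (i : nat) : Prop :=
  forall u v, V u -> V v -> u != v -> pindex c k u v = i%:Z ->
    ~ Sidx c k S i (edge u v) ->
    exists ps : seq (pt * pt),
      (1 <= size ps)%N /\
      (forall p, p \in ps -> Sidx c k S i (edge p.1 p.2)) /\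
      \sum_(p <- ps) eucl_dist p.1 p.2 + (1 + eps) * gaps u ps v < (1 + eps) * eucl_dist u v.

Fixpoint is_walk (S : set {fset pt}) (u : pt) (s : seq pt) (v : pt) : Prop :=
  match s with
  | [::] => u = v
  | x :: s' => S (edge u x) /\ is_walk S x s' v
  end.

Fixpoint walk_len (u : pt) (s : seq pt) : R :=
  match s with
  | [::] => 0
  | x :: s' => eucl_dist u x + walk_len x s'
  end.

(* shortest-path distance d_S(u,v) (+oo if no path) *)
Definition sdist (S : set {fset pt}) (u v : pt) : \bar R :=
  ereal_inf [set (walk_len u s)%:E | s in [set s | is_walk S u s v]].

End Spanner.

(* Main.v *)
Require Import Defs.
From HB Require Import structures.
From mathcomp Require Import all_boot all_order all_algebra.
From mathcomp Require Import finmap.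
From mathcomp Require Import all_classical all_reals all_analysis.
From mathcomp Require Import lra zify.
Import Order.TTheory GRing.Theory Num.Theory.
Local Open Scope classical_set_scope.
Local Open Scope ring_scope.

Lemma count_lt_aux (T : eqType) (p q : pred T) (s : seq T) x :
  (forall y, p y -> q y) -> x \in s -> q x -> ~~ p x ->
  (count p s < count q s)%N.
Proof.
move=> pq; elim: s => [//|a s IH].
rewrite in_cons => /orP [/eqP <-|xs] qx npx /=.
  rewrite qx (negbTE npx) /= add0n ltnS.
  by apply: sub_count => y /pq.
have := IH xs qx npx.
case pa: (p a); first by rewrite (pq _ pa).
by case: (q a) => /=; lia.
Qed.

Section S.
Variables (R : realType) (d : nat).
Notation pt := 'rV[R]_d.

Lemma dist_ge0 (x y : pt) : 0 <= eucl_dist x y.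
Proof. exact: sqrtr_ge0. Qed.

Lemma gaps_ge0 (u : pt) ps v : 0 <= gaps u ps v.
Proof.
elim: ps u => [|p ps IH] u /=; first exact: dist_ge0.
by apply: addr_ge0; [exact: dist_ge0|exact: IH].
Qed.

Lemma walk_cat (S : set {fset pt}) u s1 w s2 v :
  is_walk S u s1 w -> is_walk S w s2 v ->
  is_walk S u (s1 ++ s2) v /\ walk_len u (s1 ++ s2) = walk_len u s1 + walk_len w s2.
Proof.
elim: s1 u => [|x s1 IH] u /=.
  by move=> -> H; split => //; rewrite add0r.
move=> [Sux H1] H2; have [W L] := IH _ H1 H2.
by split => //; rewrite L addrA.
Qed.
Arguments walk_cat {S u s1 w s2 v}.

Lemma walk_edges (V : set pt) (S : set {fset pt}) (eps : R) (M : R) :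
  (forall a b, V a -> V b -> eucl_dist a b < M ->
     exists s, is_walk S a s b /\ walk_len a s <= (1 + eps) * eucl_dist a b) ->
  forall ps u v, V u -> V v ->
  (forall p, p \in ps -> S (edge p.1 p.2) /\ V p.1 /\ V p.2) ->
  gaps u ps v < M ->
  exists s, is_walk S u s v /\
    walk_len u s <= \sum_(p <- ps) eucl_dist p.1 p.2 + (1 + eps) * gaps u ps v.
Proof.
move=> IH; elim=> [|p ps IHps] u v Vu Vv Hps /=.
  move=> lt; have [s [W L]] := IH u v Vu Vv lt.
  by exists s; split => //; rewrite big_nil add0r.
move=> lt.
have [Sp [Vp1 Vp2]] := Hps p (mem_head _ _).
have g1 := dist_ge0 u p.1.
have g2 := gaps_ge0 p.2 ps v.
have [s1 [W1 L1]] := IH u p.1 Vu Vp1 (le_lt_trans (ler_wpDr g2 (lexx _)) lt).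
have [s2 [W2 L2]] : exists s, is_walk S p.2 s v /\
    walk_len p.2 s <= \sum_(q <- ps) eucl_dist q.1 q.2 + (1 + eps) * gaps p.2 ps v.
  apply: IHps => //; first by move=> q qps; apply: Hps; rewrite in_cons qps orbT.
  by apply: le_lt_trans lt; rewrite lerDr.
have W3 : is_walk S p.1 [:: p.2] p.2 by [].
have [W4 L4] := walk_cat W3 W2.
have [W5 L5] := walk_cat W1 W4.
exists (s1 ++ ([:: p.2] ++ s2)); split => //.
rewrite L5 L4 big_cons /= addr0.
rewrite mulrDr; lra.
Qed.
End S.
Arguments dist_ge0 {R d}.
Arguments gaps_ge0 {R d}.
Arguments walk_cat {R d S u s1 w s2 v}.
Arguments walk_edges {R d V S eps M}.

Theorem lemma1 (R : realType) (d : nat) (V : set 'rV[R]_d) (eps c : R) (k : nat)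
  (S : set {fset 'rV[R]_d}) :
  finite_set V -> 0 < eps -> 1 < c -> (1 <= k)%N ->
  (forall e, S e -> exists x y, V x /\ V y /\ x != y /\ e = edge x y) ->
  (forall i, (i < k)%N -> invariant1 V eps c k S i) ->
  forall u v, V u -> V v -> (sdist S u v <= ((1 + eps) * eucl_dist u v)%:E)%E.
Proof.
move=> /finite_fsetP [B VB] eps0 c1 k1 HS Hinv.
pose Q := fun a b => exists s, is_walk S a s b /\ walk_len a s <= (1 + eps) * eucl_dist a b.
pose prs := [seq (a, b) | a <- B, b <- B].
pose m := fun (u v : 'rV[R]_d) =>
  count (fun ab : 'rV[R]_d * 'rV[R]_d => eucl_dist ab.1 ab.2 < eucl_dist u v) prs.
have VS : forall e, S e -> forall z, z \in e -> V z.
  move=> e /HS [x [y [Vx [Vy [_ ->]]]]] z /fset2P [] ->; done.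
have key : forall n u v, (m u v < n)%N -> V u -> V v -> Q u v.
  elim=> [//|n IHn] u v muv Vu Vv.
  have IH : forall a b, V a -> V b -> eucl_dist a b < eucl_dist u v -> Q a b.
    move=> a b Va Vb lab; apply: (IHn a b) => //.
    rewrite -ltnS; apply: leq_trans muv; rewrite ltnS.
    apply: count_lt_aux (a, b) _ _ _ _.
    - by move=> [x y] /= h; apply: lt_trans h lab.
    - have : a \in B by move: Va; rewrite VB.
      have : b \in B by move: Vb; rewrite VB.
      by move=> bB aB; apply/allpairsP; exists (a, b).
    - exact: lab.
    - by rewrite /= ltxx.
  have dge := dist_ge0 u v.
  case: (eqVneq u v) => [<-|uv].
    by exists [::]; split => //=; apply: mulr_ge0; [lra | exact: dist_ge0].
  pose z := pindex c k u v.
  have z0 : (0 <= z)%R by apply: modz_ge0; rewrite eqz_nat; lia.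
  have zk : (z < k%:Z)%R by apply: ltz_pmod; rewrite ltz_nat.
  have ez : z = (`|z|%N)%:Z by rewrite abszE ger0_norm.
  have ik : (`|z|%N < k)%N by rewrite -ltz_nat -ez.
  have Hi := Hinv _ ik u v Vu Vv uv ez.
  case: (pselect (Sidx c k S `|z|%N (edge u v))) => [[Suv _]|nS].
    exists [:: v]; split => //=; rewrite addr0.
    have : 0 <= eps * eucl_dist u v by apply: mulr_ge0; lra.
    by rewrite mulrDl mul1r; lra.
  have [ps [_ [Hps Hlt]]] := Hi nS.
  have sum0 : 0 <= \sum_(p <- ps) eucl_dist p.1 p.2 by apply: sumr_ge0 => p _; exact: dist_ge0.
  have glt : gaps u ps v < eucl_dist u v.
    have : (1 + eps) * gaps u ps v < (1 + eps) * eucl_dist u v by lra.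
    by rewrite ltr_pM2l //; lra.
  have Hps' : forall p, p \in ps -> S (edge p.1 p.2) /\ V p.1 /\ V p.2.
    move=> p /Hps [Sp _]; split => //; split; apply: (VS _ Sp).
    - exact: fset21.
    - exact: fset22.
  have [s [W L]] := walk_edges IH ps u v Vu Vv Hps' glt.
  by exists s; split => //; lra.
move=> u v Vu Vv.
have [s [W L]] := key (m u v).+1 u v (ltnSn _) Vu Vv.
apply: ge_ereal_inf; exists (walk_len u s)%:E; first by exists s.
by rewrite lee_fin.
Qed.
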